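(* Define $F(n)$ and $G(n)$ by $F(0)=F(1)=G(0)=G(1)=1$ and, for $n\ge 2$, \[ F(n)=G(n)+\sum_{\ell,m\ge 1,\ \ell+m=n} G(\ell)G(m),\qquad G(n)=F(n-1)+G(n-1)+\sum_{\ell,m\ge 1,\ \ell+m=n-1} G(\ell)G(m). \] Then for all $n\ge 2$, \[ G(n)=2\sum_{m=1}^{n-1} G(m)\,G(n-1-m). \] *)

(* Defs.v *)
From mathcomp Require Import all_boot.
Set Implicit Arguments. Unset Strict Implicit. Unset Printing Implicit Defensive.

Definition FG_rec (F G : nat -> nat) : Prop :=
  [/\ [/\ F 0 = 1, F 1 = 1, G 0 = 1 & G 1 = 1],
      (forall n, 2 <= n ->
         F n = G n + \sum_(1 <= l < n) G l * G (n - l))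
    & (forall n, 2 <= n ->
         G n = F n.-1 + G n.-1 + \sum_(1 <= l < n.-1) G l * G (n.-1 - l))].

(* Main.v *)
Require Import Defs.
From mathcomp Require Import all_boot.
From mathcomp Require Import zify.

Theorem mainTheorem3 (F G : nat -> nat) (hFG : FG_rec F G) (n : nat) (hn : 2 <= n) :
  G n = 2 * \sum_(1 <= m < n) G m * G (n.-1 - m).
Proof.
case: hFG => [[F0 F1 G0 G1] HF HG].
case: n hn => [|[|k]] // _.
rewrite HG // /= [in RHS]big_nat_recr //= subnn G0 muln1.
case: k => [|k].
  by rewrite F1 G1 big_geq.
rewrite HF //.
set S := \sum_(1 <= l < k.+2) _.
rewrite mul2n -addnn; lia.
Qed.
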